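(* Let $D$ be a strongly connected digraph with at least two vertices. Then (a) $src^*(D)=1$ if and only if $rc^*(D)=1$, if and only if $D$ is the biorientation $\overleftrightarrow{K_n}$ of the complete graph $K_n$ for some $n\ge 2$; (b) $rc^*(D)=2$ if and only if $src^*(D)=2$.
   Context: All digraphs are finite, without loops or multiple arcs. For a strongly connected digraph $D$ and an arc-colouring $\Gamma:A(D)\to\{1,\dots,k\}$, a directed path is rainbow if no two of its arcs receive the same colour. $\Gamma$ is rainbow connected if for every ordered pair of distinct vertices $x,y$ there is a rainbow directed $xy$-path; $rc^*(D)$ is the minimum $k$ for which a rainbow connected arc-colouring with $k$ colours exists. $\Gamma$ is strongly rainbow connected if for every ordered pair of distinct vertices $x,y$ there is a rainbow directed $xy$-path of length $d_D(x,y)$; $src^*(D)$ is the minimum such $k$. The biorientation $\overleftrightarrow{G}$ of a graph $G$ is the digraph obtained by replacing each edge $uv$ by the two arcs $uv$ and $vu$. *)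

(* Defs.v *)
(* A digraph is a finite vertex type V with an arc relation
   arc : rel V (arc x y = there is an arc xy); no loops = irreflexive arc.
   Multiple arcs are impossible by construction. *)
From mathcomp Require Import all_boot.
Set Implicit Arguments. Unset Strict Implicit. Unset Printing Implicit Defensive.

Section Digraphs.
Variable V : finType.
Variable arc : rel V.

Definition strongly_connected : Prop := forall x y : V, connect arc x y.

(* A directed xy-path, given as the list p of vertices after x:
   x -> p_0 -> ... -> y, with all vertices distinct.  Its length is size p. *)
Definition is_dipath (x y : V) (p : seq V) : bool :=
  [&& path arc x p, last x p == y & uniq (x :: p)].

Definition path_colours (k : nat) (c : V -> V -> 'I_k) (x : V) (p : seq V)
  : seq 'I_k := [seq c a.1 a.2 | a <- zip (x :: p) p].

Definition rainbow (k : nat) (c : V -> V -> 'I_k) (x : V) (p : seq V) : bool :=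
  uniq (path_colours c x p).

Definition geodesic (x y : V) (p : seq V) : Prop :=
  is_dipath x y p /\ forall q, is_dipath x y q -> size p <= size q.

(* arc-colourings with k colours {1..k} are functions on ordered pairs with
   values in 'I_k; only the values on arcs matter. *)
Definition rainbow_connected (k : nat) (c : V -> V -> 'I_k) : Prop :=
  forall x y, x != y -> exists p, is_dipath x y p && rainbow c x p.

Definition strongly_rainbow_connected (k : nat) (c : V -> V -> 'I_k) : Prop :=
  forall x y, x != y -> exists p, geodesic x y p /\ rainbow c x p.

Definition rc_eq (k : nat) : Prop :=
  (exists c : V -> V -> 'I_k, rainbow_connected c) /\
  (forall j, j < k -> ~ exists c : V -> V -> 'I_j, rainbow_connected c).

Definition src_eq (k : nat) : Prop :=
  (exists c : V -> V -> 'I_k, strongly_rainbow_connected c) /\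
  (forall j, j < k -> ~ exists c : V -> V -> 'I_j, strongly_rainbow_connected c).

Definition is_complete_biorientation : Prop :=
  forall x y : V, arc x y = (x != y).
End Digraphs.

(* Main.v *)
Require Import Defs.
From mathcomp Require Import all_boot.
From mathcomp Require Import zify.
Set Implicit Arguments. Unset Strict Implicit.

Section S.
Variable V : finType.
Variable arc : rel V.

Lemma size_pc k (c : V -> V -> 'I_k) x p : size (path_colours c x p) = size p.
Proof. rewrite /path_colours size_map size_zip /=. lia. Qed.

Lemma rainbow_size k (c : V -> V -> 'I_k) x p : rainbow c x p -> size p <= k.
Proof.
move=> /card_uniqP H; rewrite -(size_pc c x p) -H.
by apply: leq_trans (max_card _) _; rewrite card_ord.
Qed.

Lemma dipath_gt0 x y p : x != y -> is_dipath arc x y p -> 0 < size p.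
Proof. case: p => //= Hn /and3P [_ E _]; by rewrite (negPf Hn) in E. Qed.

Lemma dipath1 x y z : is_dipath arc x y [:: z] -> arc x y.
Proof. by rewrite /is_dipath /= andbT => /and3P [H /eqP <- _]. Qed.

Lemma dipath_arc x y : arc x y -> x != y -> is_dipath arc x y [:: y].
Proof. by move=> H Hn; rewrite /is_dipath /= H eqxx inE Hn. Qed.

Lemma rainbow1 k (c : V -> V -> 'I_k) x y : rainbow c x [:: y].
Proof. by []. Qed.

Lemma arc_geodesic x y : arc x y -> x != y -> geodesic arc x y [:: y].
Proof.
move=> H Hn; split; first exact: dipath_arc.
by move=> q Hq; exact: dipath_gt0 Hq.
Qed.

Lemma src_rc k (c : V -> V -> 'I_k) :
  strongly_rainbow_connected arc c -> rainbow_connected arc c.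
Proof.
move=> H x y Hxy; have [p [[Hp _] Hr]] := H x y Hxy.
by exists p; rewrite Hp Hr.
Qed.



Lemma rc1 (c : V -> V -> 'I_1) : irreflexive arc ->
  rainbow_connected arc c -> is_complete_biorientation arc.
Proof.
move=> Hirr H x y; case: (eqVneq x y) => [-> | Hxy]; first by rewrite Hirr.
have [p /andP [Hp Hr]] := H x y Hxy.
have := rainbow_size Hr; have := dipath_gt0 Hxy Hp.
case: p Hp Hr => [|z [|? ?]] //= Hp _ _ _.
exact: dipath1 Hp.
Qed.

Lemma complete_src k (c : V -> V -> 'I_k) :
  is_complete_biorientation arc -> strongly_rainbow_connected arc c.
Proof.
move=> H x y Hxy; exists [:: y]; split; last exact: rainbow1.
by apply: arc_geodesic; rewrite ?H.
Qed.

Lemma rc2_src (c : V -> V -> 'I_2) :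
  rainbow_connected arc c -> strongly_rainbow_connected arc c.
Proof.
move=> H x y Hxy; case Ha: (arc x y).
  by exists [:: y]; split; [exact: arc_geodesic | exact: rainbow1].
have [p /andP [Hp Hr]] := H x y Hxy.
exists p; split => //; split => // q Hq.
have := rainbow_size Hr; have := dipath_gt0 Hxy Hq.
case: q Hq => [|z [|? ?]] //= Hq _.
  by rewrite (dipath1 Hq) in Ha.
move=> H2; apply: leq_trans H2 _; by [].
Qed.

Lemma no0 (P : (V -> V -> 'I_0) -> Prop) : 0 < #|V| -> ~ exists c, P c.
Proof. by move=> /card_gt0P [v _] [c _]; case: (c v v). Qed.

End S.

Theorem theorem2 (V : finType) (arc : rel V) :
  irreflexive arc -> strongly_connected arc -> 2 <= #|V| ->
  ((src_eq arc 1 <-> rc_eq arc 1) /\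
   (rc_eq arc 1 <-> is_complete_biorientation arc)) /\
  (rc_eq arc 2 <-> src_eq arc 2).
Proof.
move=> Hirr _ HV.
have HV0 : 0 < #|V| by apply: leq_trans HV.
have c1 : V -> V -> 'I_1 := fun _ _ => ord0.
have N0 : forall (P : (V -> V -> 'I_0) -> Prop), ~ exists c, P c.
  by move=> P; apply: no0.
have Hlt1 : forall j, j < 1 -> j = 0 by case.
have Hlt2 : forall j, j < 2 -> j = 0 \/ j = 1 by case=> [|[|]]; auto.
have Hcomp : rc_eq arc 1 <-> is_complete_biorientation arc.
  split.
    by move=> [[c Hc] _]; exact: rc1 Hc.
  move=> H; split; first by exists c1; apply: src_rc; apply: complete_src.
  by move=> j /Hlt1 ->; apply: N0.
split; [split => // |].
  split.
    move=> [[c Hc] _]; split; first by exists c; apply: src_rc.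
    by move=> j /Hlt1 ->; apply: N0.
  move=> /Hcomp H; split; first by exists c1; apply: complete_src.
  by move=> j /Hlt1 ->; apply: N0.
split.
  move=> [[c Hc] Hn]; split; first by exists c; apply: rc2_src.
  move=> j /Hlt2 [->|->]; first by apply: N0.
  move=> [c' Hc']; apply: (Hn 1 erefl); exists c'; exact: src_rc.
move=> [[c Hc] Hn]; split; first by exists c; apply: src_rc.
move=> j /Hlt2 [->|->]; first by apply: N0.
move=> [c' Hc']; apply: (Hn 1 erefl); exists c1; apply: complete_src.
exact: rc1 Hc'.
Qed.
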